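(* Consider a two-asset G3M with fee parameter $\gamma\in(0,1)$ and a reference price process $(S_t)_{t\ge 0}$, $S_t>0$. Arbitrageurs arrive at deterministic times $0=\tau_0<\tau_1<\dots<\tau_m\le T$. The pool price $P_t>0$ is constant on each interval $[\tau_i,\tau_{i+1})$ (and on $[\tau_m,\infty)$), and at each arrival time it is updated so that, writing $Z_t=\ln(S_t/P_t)$ and $Z_{\tau_i^-}:=\ln S_{\tau_i}-\ln P_{\tau_{i-1}}$ for $i\ge1$ (and $Z_{0^-}:=\ln S_0-\ln P_0$), $$Z_{\tau_i}=\max\{\min\{Z_{\tau_i^-},-\ln\gamma\},\ln\gamma\}.$$ Assume $\gamma P_0\le S_0\le\gamma^{-1}P_0$. Define $$J_i=\max\{\min\{Z_{\tau_i^-},-\ln\gamma\},\ln\gamma\}-Z_{\tau_i^-},\quad L_t=\sum_{i:\tau_i\le t}\{J_i\}^+,\quad U_t=\sum_{i:\tau_i\le t}\{J_i\}^-,$$ where $\{a\}^+=\max\{a,0\}$ and $\{a\}^-=\max\{-a,0\}$. Then for all $t\ge0$, $$\ln P_t=\ln P_0+U_t-L_t,\qquad Z_t=\ln S_t-\ln P_0+L_t-U_t,$$ and moreover $$L_t=\sup_{i:\tau_i\le t}\big(-\ln(\gamma P_0)+\ln S_{\tau_i}-U_{\tau_i}\big)^-,\qquad U_t=\sup_{i:\tau_i\le t}\big(\ln(\gamma^{-1}P_0)-\ln S_{\tau_i}-L_{\tau_i}\big)^-,$$ where $(a)^-=\max\{-a,0\}$.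
   Context: Setting: a G3M (geometric mean market maker) pool for assets $X,Y$ with proportional fee $1-\gamma$; $P_t$ is the pool price of $X$ in units of $Y$, $S_t$ the price of $X$ in units of $Y$ on a frictionless external reference market with infinite liquidity. There are no noise traders, so the pool price changes only at arbitrageur arrival times, where arbitrageurs trade just enough to bring the mispricing $Z=\ln(S/P)$ back into the no-arbitrage interval $[\ln\gamma,-\ln\gamma]$ (and do nothing if it is already inside), as encoded in the update rule above. *)

(* Defs.v *)
From Stdlib Require Import Reals Lra.
Open Scope R_scope.

Definition clip (g z : R) : R := Rmax (Rmin z (- ln g)) (ln g).

Definition posp (a : R) : R := Rmax a 0.
Definition negp (a : R) : R := Rmax (- a) 0.

Definition Zpre (Sref P : R -> R) (tau : nat -> R) (i : nat) : R :=
  match i with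
  | O => ln (Sref 0) - ln (P 0)
  | S j => ln (Sref (tau i)) - ln (P (tau j))
  end.

Definition Jump (g : R) (Sref P : R -> R) (tau : nat -> R) (i : nat) : R :=
  clip g (Zpre Sref P tau i) - Zpre Sref P tau i.

Definition Lproc (g : R) (Sref P : R -> R) (tau : nat -> R) (m : nat) (t : R) : R :=
  sum_f_R0 (fun i => if Rle_dec (tau i) t then posp (Jump g Sref P tau i) else 0) m.

Definition Uproc (g : R) (Sref P : R -> R) (tau : nat -> R) (m : nat) (t : R) : R :=
  sum_f_R0 (fun i => if Rle_dec (tau i) t then negp (Jump g Sref P tau i) else 0) m.

(* Main.v *)
Require Import Defs.
From Stdlib Require Import Reals.
From Stdlib Require Import Lra Lia.
Open Scope R_scope.

Lemma ln_le' x y : 0 < x -> x <= y -> ln x <= ln y.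
Proof. intros Hx [H|H]. left; now apply ln_increasing. subst; lra. Qed.

Lemma clip_bounds g z : ln g < 0 -> ln g <= clip g z <= - ln g.
Proof. intros; unfold clip, Rmax, Rmin; repeat destruct Rle_dec; lra. Qed.

Lemma clip_pos g z : ln g < 0 -> clip g z - z > 0 -> clip g z = ln g.
Proof. intros; unfold clip, Rmax, Rmin in *; repeat destruct Rle_dec; lra. Qed.

Lemma clip_neg g z : ln g < 0 -> clip g z - z < 0 -> clip g z = - ln g.
Proof. intros; unfold clip, Rmax, Rmin in *; repeat destruct Rle_dec; lra. Qed.

Lemma clip_id g z : ln g <= z <= - ln g -> clip g z = z.
Proof. intros; unfold clip, Rmax, Rmin in *; repeat destruct Rle_dec; lra. Qed.

Lemma posp_negp x : posp x - negp x = x /\ 0 <= posp x /\ 0 <= negp x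
  /\ (posp x > 0 -> x > 0) /\ (negp x > 0 -> x < 0)
  /\ (posp x = 0 \/ posp x > 0) /\ (negp x = 0 \/ negp x > 0).
Proof. unfold posp, negp, Rmax; repeat destruct Rle_dec; lra. Qed.

Lemma negp_max x : negp x = Rmax (- x) 0.
Proof. reflexivity. Qed.

Lemma tau_mono (tau : nat -> R) m :
  (forall i, (i < m)%nat -> tau i < tau (S i)) ->
  forall i j, (i <= j <= m)%nat -> tau i <= tau j.
Proof.
  intros H i j; induction j; intros Hij.
  - assert (i = 0)%nat by lia; subst; lra.
  - destruct (Nat.eq_dec i (S j)). subst; lra.
    specialize (H j ltac:(lia)). specialize (IHj ltac:(lia)). lra.
Qed.

Lemma tau_smono (tau : nat -> R) m :
  (forall i, (i < m)%nat -> tau i < tau (S i)) ->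
  forall i j, (i < j <= m)%nat -> tau i < tau j.
Proof.
  intros H i j Hij.
  assert (tau i < tau (S i)) by (apply H; lia).
  assert (tau (S i) <= tau j) by (apply (tau_mono tau m H); lia). lra.
Qed.

Lemma index_ex (tau : nat -> R) m t :
  (forall i, (i < m)%nat -> tau i < tau (S i)) -> tau 0%nat <= t ->
  exists k, (k <= m)%nat /\ tau k <= t /\ (k = m \/ t < tau (S k)).
Proof.
  intros H H0.
  assert (G : forall m', (m' <= m)%nat -> exists k, (k <= m')%nat /\ tau k <= t /\ (k = m' \/ t < tau (S k))).
  { induction m'; intros Hm.
    - exists 0%nat; repeat split; auto.
    - destruct (IHm' ltac:(lia)) as [k [Hk [Ht [E|E]]]].
      + subst k. destruct (Rle_dec (tau (S m')) t).
        * exists (S m'); repeat split; auto.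
        * exists m'; repeat split; auto. right; lra.
      + exists k; repeat split; auto. }
  destruct (G m (le_n _)) as [k Hk]; exists k; exact Hk.
Qed.

Lemma trunc (tau : nat -> R) m t k (f : nat -> R) :
  (forall i, (i < m)%nat -> tau i < tau (S i)) ->
  (k <= m)%nat -> tau k <= t -> (k = m \/ t < tau (S k)) ->
  forall n, (n <= m)%nat ->
  sum_f_R0 (fun i => if Rle_dec (tau i) t then f i else 0) n = sum_f_R0 f (Nat.min n k).
Proof.
  intros H Hk Ht Hk2 n; induction n; intros Hn.
  - simpl. assert (tau 0%nat <= t) by (pose proof (tau_mono tau m H 0 k ltac:(lia)); lra).
    destruct Rle_dec; [reflexivity|lra].
  - simpl sum_f_R0 at 1. rewrite IHn by lia.
    destruct (Compare_dec.le_lt_dec (S n) k).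
    + assert (tau (S n) <= t) by (pose proof (tau_mono tau m H (S n) k ltac:(lia)); lra).
      destruct Rle_dec; [|lra].
      rewrite !Nat.min_l by lia. reflexivity.
    + assert (t < tau (S n)).
      { destruct Hk2 as [E|E]. lia.
        pose proof (tau_mono tau m H (S k) (S n) ltac:(lia)); lra. }
      destruct Rle_dec; [lra|].
      rewrite !Nat.min_r by lia. lra.
Qed.
Lemma sum_mono (f : nat -> R) : (forall i, 0 <= f i) ->
  forall i k, (i <= k)%nat -> sum_f_R0 f i <= sum_f_R0 f k.
Proof.
  intros H i k; induction k; intros Hik.
  - assert (i = 0)%nat by lia; subst; lra.
  - destruct (Nat.eq_dec i (S k)). subst; lra.
    simpl. specialize (IHk ltac:(lia)). specialize (H (S k)). lra.
Qed.

Theorem mainTheorem1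
  (g : R) (Sref P : R -> R) (m : nat) (tau : nat -> R) (T : R)
  (hg : 0 < g < 1)
  (hS : forall t, 0 <= t -> 0 < Sref t)
  (hP : forall t, 0 <= t -> 0 < P t)
  (htau0 : tau 0%nat = 0)
  (htau_incr : forall i, (i < m)%nat -> tau i < tau (S i))
  (htauT : tau m <= T)
  (hPconst : forall i, (i < m)%nat -> forall t, tau i <= t < tau (S i) -> P t = P (tau i))
  (hPlast : forall t, tau m <= t -> P t = P (tau m))
  (hupdate : forall i, (i <= m)%nat ->
     ln (Sref (tau i)) - ln (P (tau i)) = clip g (Zpre Sref P tau i))
  (hinit : g * P 0 <= Sref 0 <= / g * P 0) :
  forall t, 0 <= t ->
    ln (P t) = ln (P 0) + Uproc g Sref P tau m t - Lproc g Sref P tau m t /\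
    ln (Sref t / P t) = ln (Sref t) - ln (P 0) + Lproc g Sref P tau m t - Uproc g Sref P tau m t /\
    is_lub (fun x => exists i, (i <= m)%nat /\ tau i <= t /\
              x = negp (- ln (g * P 0) + ln (Sref (tau i)) - Uproc g Sref P tau m (tau i)))
           (Lproc g Sref P tau m t) /\
    is_lub (fun x => exists i, (i <= m)%nat /\ tau i <= t /\
              x = negp (ln (/ g * P 0) - ln (Sref (tau i)) - Lproc g Sref P tau m (tau i)))
           (Uproc g Sref P tau m t).
Proof.
  intros t ht.
  assert (Ha : ln g < 0) by (rewrite <- ln_1; apply ln_increasing; lra).
  assert (HP0 : 0 < P 0) by (apply hP; lra).
  assert (HS0 : 0 < Sref 0) by (apply hS; lra).
  assert (Hlg1 : ln (g * P 0) = ln g + ln (P 0)) by (apply ln_mult; lra).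
  assert (Hlg2 : ln (/ g * P 0) = - ln g + ln (P 0)).
  { rewrite ln_mult, ln_Rinv; try lra. apply Rinv_0_lt_compat; lra. }
  assert (Hinit2 : ln g + ln (P 0) <= ln (Sref 0) <= - ln g + ln (P 0)).
  { rewrite <- Hlg1, <- Hlg2. split; apply ln_le'; try lra.
    apply Rmult_lt_0_compat; lra. }
  set (p := fun i => ln (P (tau i))).
  set (s := fun i => ln (Sref (tau i))).
  set (J := fun i => Jump g Sref P tau i).
  assert (Hp0 : p 0%nat = ln (P 0)) by (unfold p; now rewrite htau0).
  assert (Hs0 : s 0%nat = ln (Sref 0)) by (unfold s; now rewrite htau0).
  assert (HJ0 : J 0%nat = 0).
  { unfold J, Jump. simpl Zpre. rewrite clip_id; lra. }
  assert (Hrec : forall i, (S i <= m)%nat -> p (S i) = p i - J (S i)).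
  { intros i Hi. pose proof (hupdate (S i) Hi) as E. unfold J, Jump, p.
    rewrite <- E. simpl Zpre. ring. }
  set (Lk := fun n => sum_f_R0 (fun i => posp (J i)) n).
  set (Uk := fun n => sum_f_R0 (fun i => negp (J i)) n).
  assert (HL0 : Lk 0%nat = 0) by (unfold Lk; simpl; rewrite HJ0; unfold posp, Rmax; destruct Rle_dec; lra).
  assert (HU0 : Uk 0%nat = 0) by (unfold Uk; simpl; rewrite HJ0; unfold negp, Rmax; destruct Rle_dec; lra).
  assert (HLS : forall n, Lk (S n) = Lk n + posp (J (S n))) by reflexivity.
  assert (HUS : forall n, Uk (S n) = Uk n + negp (J (S n))) by reflexivity.
  assert (HLm : forall i k, (i <= k)%nat -> Lk i <= Lk k).
  { intros; apply sum_mono; auto. intro j; apply (posp_negp (J j)). }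
  assert (HUm : forall i k, (i <= k)%nat -> Uk i <= Uk k).
  { intros; apply sum_mono; auto. intro j; apply (posp_negp (J j)). }
  assert (Hpk : forall i, (i <= m)%nat -> p i = p 0%nat + Uk i - Lk i).
  { induction i; intros Hi. rewrite HL0, HU0; ring.
    rewrite Hrec, HLS, HUS, IHi by lia. pose proof (posp_negp (J (S i))). lra. }
  assert (HZb : forall i, (i <= m)%nat -> ln g <= s i - p i <= - ln g).
  { intros i Hi. unfold s, p. rewrite hupdate by auto. apply clip_bounds; auto. }
  assert (Hproc : forall t' k', (k' <= m)%nat -> tau k' <= t' -> (k' = m \/ t' < tau (S k')) ->
     Lproc g Sref P tau m t' = Lk k' /\ Uproc g Sref P tau m t' = Uk k').
  { intros t' k' H1 H2 H3. split.
    - pose proof (trunc tau m t' k' (fun i => posp (J i)) htau_incr H1 H2 H3 m (le_n m)) as E.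
      rewrite Nat.min_r in E by lia. exact E.
    - pose proof (trunc tau m t' k' (fun i => negp (J i)) htau_incr H1 H2 H3 m (le_n m)) as E.
      rewrite Nat.min_r in E by lia. exact E. }
  assert (Hproci : forall i, (i <= m)%nat ->
     Lproc g Sref P tau m (tau i) = Lk i /\ Uproc g Sref P tau m (tau i) = Uk i).
  { intros i Hi. apply Hproc; auto. lra.
    destruct (Nat.eq_dec i m); [left; auto | right; apply htau_incr; lia]. }
  destruct (index_ex tau m t htau_incr ltac:(lra)) as [k [Hk [Htk Hk2]]].
  destruct (Hproc t k Hk Htk Hk2) as [HL HU].
  rewrite HL, HU.
  assert (HPt : P t = P (tau k)).
  { destruct (Nat.eq_dec k m). subst; apply hPlast; auto.
    apply (hPconst k ltac:(lia)). destruct Hk2; [lia|lra]. }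
  assert (Hik : forall i, (i <= m)%nat -> tau i <= t -> (i <= k)%nat).
  { intros i Hi Hti. destruct (Compare_dec.le_lt_dec i k); auto.
    destruct Hk2 as [E|E]; [lia|].
    pose proof (tau_mono tau m htau_incr (S k) i ltac:(lia)). lra. }
  assert (Htpos : forall i, (i <= m)%nat -> 0 <= tau i).
  { intros i Hi. rewrite <- htau0. apply (tau_mono tau m htau_incr); lia. }
  assert (Hpart1 : ln (P t) = ln (P 0) + Uk k - Lk k).
  { rewrite HPt. change (p k = ln (P 0) + Uk k - Lk k). rewrite Hpk, Hp0 by auto. ring. }
  split; [exact Hpart1|].
  split.
  { unfold Rdiv. rewrite ln_mult, ln_Rinv; try (apply hP; lra); try (apply hS; lra).
    lra. apply Rinv_0_lt_compat; apply hP; lra. }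
  split.
  -
    assert (Wit : forall k', (k' <= m)%nat -> exists j, (j <= k')%nat /\
               Lk k' = Rmax (ln g + ln (P 0) - s j + Uk j) 0).
    { induction k'; intros Hk'.
      - exists 0%nat. split; auto. rewrite HL0, HU0. unfold Rmax; destruct Rle_dec; lra.
      - destruct (posp_negp (J (S k'))) as [_ [_ [_ [Hpp [_ [[E|E] _]]]]]].
        + destruct (IHk' ltac:(lia)) as [j [Hj Ej]]. exists j. split; [lia|].
          rewrite HLS, E, <- Ej. ring.
        + exists (S k'). split; auto.
          assert (Hc : s (S k') - p (S k') = ln g).
          { unfold s, p. rewrite hupdate by auto. apply clip_pos; [auto|].
            specialize (Hpp E). unfold J, Jump in Hpp. lra. }
          rewrite Hpk in Hc by auto. rewrite Hp0 in Hc.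
          assert (0 <= Lk (S k')) by (rewrite <- HL0; apply HLm; lia).
          rewrite Rmax_left; lra. }
    split.
    + intros x [i [Hi [Hti ->]]].
      destruct (Hproci i Hi) as [_ ->]. rewrite negp_max, Hlg1.
      pose proof (Hik i Hi Hti). pose proof (HLm i k H). pose proof (HLm 0%nat i ltac:(lia)).
      pose proof (HZb i Hi). rewrite Hpk, Hp0 in H2 by auto. unfold s in H2.
      apply Rmax_lub; lra.
    + intros b Hb. apply Hb. destruct (Wit k Hk) as [j [Hj Ej]].
      exists j. split; [lia|]. split.
      { pose proof (tau_mono tau m htau_incr j k ltac:(lia)); lra. }
      destruct (Hproci j ltac:(lia)) as [_ ->]. rewrite negp_max, Hlg1, Ej.
      unfold s. f_equal. ring.
  -
    assert (Wit : forall k', (k' <= m)%nat -> exists j, (j <= k')%nat /\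
               Uk k' = Rmax (ln g - ln (P 0) + s j + Lk j) 0).
    { induction k'; intros Hk'.
      - exists 0%nat. split; auto. rewrite HL0, HU0. unfold Rmax; destruct Rle_dec; lra.
      - destruct (posp_negp (J (S k'))) as [_ [_ [_ [_ [Hpp [_ [E|E]]]]]]].
        + destruct (IHk' ltac:(lia)) as [j [Hj Ej]]. exists j. split; [lia|].
          rewrite HUS, E, <- Ej. ring.
        + exists (S k'). split; auto.
          assert (Hc : s (S k') - p (S k') = - ln g).
          { unfold s, p. rewrite hupdate by auto. apply clip_neg; [auto|].
            specialize (Hpp E). unfold J, Jump in Hpp. lra. }
          rewrite Hpk in Hc by auto. rewrite Hp0 in Hc.
          assert (0 <= Uk (S k')) by (rewrite <- HU0; apply HUm; lia).
          rewrite Rmax_left; lra. }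
    split.
    + intros x [i [Hi [Hti ->]]].
      destruct (Hproci i Hi) as [-> _]. rewrite negp_max, Hlg2.
      pose proof (Hik i Hi Hti). pose proof (HUm i k H). pose proof (HUm 0%nat i ltac:(lia)).
      pose proof (HZb i Hi). rewrite Hpk, Hp0 in H2 by auto. unfold s in H2.
      apply Rmax_lub; lra.
    + intros b Hb. apply Hb. destruct (Wit k Hk) as [j [Hj Ej]].
      exists j. split; [lia|]. split.
      { pose proof (tau_mono tau m htau_incr j k ltac:(lia)); lra. }
      destruct (Hproci j ltac:(lia)) as [-> _]. rewrite negp_max, Hlg2, Ej.
      unfold s. f_equal. ring.
Qed.
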